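(* Let $D$ be a division algebra and let $n\ge 0$. For every proper two-sided ideal $I$ of the polynomial ring $D[t_1,\ldots,t_n]$ in $n$ central commuting variables over $D$, the quotient ring $S=D[t_1,\ldots,t_n]/I$ (which contains $D$ via $r\mapsto r+I$) is centrally normalizable over $D$. Equivalently, the tuple $(\mathrm{id}_D,\ldots,\mathrm{id}_D)$ is centrally normalizable over $D$.
   Context: All rings are associative with unity. A ring $S$ containing a division algebra $D$ is finite over a subring $R$ if $S$ is finitely generated as a left $R$-module. Elements $a_1,\ldots,a_m$ of $S$ centralize $D$ if $a_ib=ba_i$ for all $b\in D$. Commuting elements $a_1,\ldots,a_m\in S$ are (left) algebraically independent over $D$ if the monomials $a_1^{i_1}\cdots a_m^{i_m}$, $(i_1,\ldots,i_m)\in\mathbb{Z}_{\ge0}^m$, are left linearly independent over $D$. $S$ is centrally normalizable over $D$ if there exist $m\ge 0$ and commuting elements $a_1,\ldots,a_m\in S$ which centralize $D$, are left algebraically independent over $D$, and such that $S$ is finite (as a left module) over the subring $D[a_1,\ldots,a_m]$ generated by $D\cup\{a_1,\ldots,a_m\}$. A tuple of automorphisms is centrally normalizable over $D$ if every quotient of the corresponding skew polynomial ring by a proper two-sided ideal is centrally normalizable over $D$. *)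

(* Defs.v *)
From HB Require Import structures.
From mathcomp Require Import all_boot all_algebra.
From mathcomp Require Import mpoly.
Set Implicit Arguments. Unset Strict Implicit. Unset Printing Implicit Defensive.
Import GRing.Theory.
Local Open Scope ring_scope.

Definition division_ring (D : unitRingType) : Prop :=
  forall x : D, x != 0 -> x \is a GRing.unit.

Definition proper_twosided_ideal (R : ringType) (I : {pred R}) : Prop :=
  [/\ 0 \in I,
      (forall x y, x \in I -> y \in I -> x + y \in I),
      (forall r x, x \in I -> r * x \in I),
      (forall r x, x \in I -> x * r \in I)
    & 1 \notin I].

Definition monom (S : ringType) (m : nat) (a : 'I_m -> S) (e : 'X_{1..m}) : S :=
  \prod_(i < m) a i ^+ e i.

Definition gen_subring (D S : ringType) (f : D -> S) (m : nat) (a : 'I_m -> S)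
    (x : S) : Prop :=
  forall P : S -> Prop,
    P 1 -> (forall y z, P y -> P z -> P (y - z)) ->
    (forall y z, P y -> P z -> P (y * z)) ->
    (forall b, P (f b)) -> (forall i, P (a i)) -> P x.

Definition finite_over_gen (D S : ringType) (f : D -> S) (m : nat) (a : 'I_m -> S)
    : Prop :=
  exists s : seq S, forall x : S,
    exists r : nat -> S,
      (forall j, (j < size s)%N -> gen_subring f a (r j)) /\
      x = \sum_(j < size s) r j * s`_j.

Definition centrally_normalizable (D S : ringType) (f : D -> S) : Prop :=
  exists (m : nat) (a : 'I_m -> S),
    [/\ (forall i j, a i * a j = a j * a i),
        (forall i (b : D), a i * f b = f b * a i),
        (* left algebraic independence over D: the monomials are left
           linearly independent over D *)
        (forall (es : seq 'X_{1..m}) (c : 'X_{1..m} -> D),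
            uniq es -> \sum_(e <- es) f (c e) * monom a e = 0 ->
            forall e, e \in es -> c e = 0)
      & finite_over_gen f a].

(* Main.v *)
Require Import Defs.
From HB Require Import structures.
From mathcomp Require Import all_boot all_algebra.
From mathcomp Require Import mpoly.
From Stdlib Require Import Classical.
Set Implicit Arguments. Unset Strict Implicit. Unset Printing Implicit Defensive.
Import GRing.Theory.
Local Open Scope ring_scope.

Definition subr (S : ringType) (G : S -> Prop) :=
  [/\ G 1, (forall y z, G y -> G z -> G (y - z)) & (forall y z, G y -> G z -> G (y * z))].

Lemma subr0 (S : ringType) (G : S -> Prop) : subr G -> G 0.
Proof. by case=> h1 hB _; rewrite -(subrr 1); apply: hB. Qed.
Lemma subrN (S : ringType) (G : S -> Prop) y : subr G -> G y -> G (- y).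
Proof. move=> hG hy; rewrite -sub0r; have h0 := subr0 hG; case: hG => _ hB _; exact: hB. Qed.
Lemma subrD (S : ringType) (G : S -> Prop) y z : subr G -> G y -> G z -> G (y + z).
Proof. move=> hG hy hz; rewrite -[z]opprK; have hn := subrN hG hz; case: (hG) => _ hB _; exact: hB. Qed.

Inductive low (S : ringType) (G : S -> Prop) (t : S) (N : nat) : S -> Prop :=
| low0 : low G t N 0
| lowS g j z : G g -> (j < N)%N -> low G t N z -> low G t N (g * t ^+ j + z).

Lemma low_add (S : ringType) (G : S -> Prop) t N u v :
  low G t N u -> low G t N v -> low G t N (u + v).
Proof. elim=> [|g j z hg hj _ IH] hv; first by rewrite add0r.
by rewrite -addrA; apply: lowS => //; apply: IH. Qed.

Lemma low_opp (S : ringType) (G : S -> Prop) t N u : subr G ->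
  low G t N u -> low G t N (- u).
Proof. move=> hG; elim=> [|g j z hg hj _ IH]; first by rewrite oppr0; apply: low0.
by rewrite opprD -mulNr; apply: lowS => //; apply: subrN. Qed.

Lemma low_mono (S : ringType) (G : S -> Prop) t N N' u : (N <= N')%N ->
  low G t N u -> low G t N' u.
Proof. move=> hN; elim=> [|g j z hg hj _ IH]; first exact: low0.
by apply: lowS => //; apply: leq_trans hN. Qed.

Lemma low_lmul (S : ringType) (G : S -> Prop) t N h u : subr G -> G h ->
  low G t N u -> low G t N (h * u).
Proof. move=> hG hh; elim=> [|g j z hg hj _ IH]; first by rewrite mulr0; apply: low0.
rewrite mulrDr mulrA; apply: lowS => //; case: hG => _ _ hM; exact: hM. Qed.

Definition tcomm (S : ringType) (G : S -> Prop) (t : S) := forall g, G g -> g * t = t * g.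

Lemma tcommX (S : ringType) (G : S -> Prop) t g j : tcomm G t -> G g -> g * t ^+ j = t ^+ j * g.
Proof. move=> ht hg; have: GRing.comm g t by apply: ht. by move/commrX; apply. Qed.

Lemma low_rmulG (S : ringType) (G : S -> Prop) t N h u : subr G -> tcomm G t -> G h ->
  low G t N u -> low G t N (u * h).
Proof. move=> hG ht hh; elim=> [|g j z hg hj _ IH]; first by rewrite mul0r; apply: low0.
rewrite mulrDl -mulrA -(tcommX _ ht hh) mulrA; apply: lowS => //; case: hG => _ _ hM; exact: hM. Qed.

Lemma low_tmul (S : ringType) (G : S -> Prop) t B j v : tcomm G t ->
  low G t B v -> low G t (j + B) (t ^+ j * v).
Proof. move=> ht; elim=> [|g i z hg hi _ IH]; first by rewrite mulr0; apply: low0.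
rewrite mulrDr mulrA -(tcommX _ ht hg) -mulrA -exprD; apply: lowS => //.
by rewrite ltn_add2l. Qed.

Lemma low_rmult (S : ringType) (G : S -> Prop) t N w u :
  low G t N u -> low G t (N + w) (u * t ^+ w).
Proof. elim=> [|g i z hg hi _ IH]; first by rewrite mul0r; apply: low0.
rewrite mulrDl -mulrA -exprD; apply: lowS => //; by rewrite ltn_add2r. Qed.

Lemma low_mul (S : ringType) (G : S -> Prop) t A B u v : subr G -> tcomm G t ->
  low G t A u -> low G t B v -> low G t (A + B) (u * v).
Proof. move=> hG ht; elim=> [|g j z hg hj _ IH] hv; first by rewrite mul0r; apply: low0.
rewrite mulrDl -mulrA; apply: low_add; last exact: IH.
apply: low_lmul => //; apply: (@low_mono _ _ _ (j + B)); first by rewrite leq_add2r ltnW.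
exact: low_tmul. Qed.

Definition mon (S : ringType) (G : S -> Prop) t N z := low G t N (z - t ^+ N).

Lemma mon_mul (S : ringType) (G : S -> Prop) t A B u v : subr G -> tcomm G t ->
  mon G t A u -> mon G t B v -> mon G t (A + B) (u * v).
Proof. rewrite /mon => hG ht hu hv.
have -> : u = t ^+ A + (u - t ^+ A) by rewrite addrC subrK.
have -> : v = t ^+ B + (v - t ^+ B) by rewrite addrC subrK.
move: (u - t ^+ A) (v - t ^+ B) hu hv => l1 l2 hu hv.
have E (a b c : S) : a + b + c - a = b + c by rewrite addrAC [a + b - a]addrAC subrr add0r.
rewrite exprD mulrDl !mulrDr E.
apply: low_add; first exact: low_tmul.
apply: low_add; first exact: low_rmult.
exact: low_mul. Qed.

Lemma mon_y (S : ringType) (G : S -> Prop) t w y : G y -> (0 < w)%N -> mon G t w (y + t ^+ w).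
Proof. move=> hy hw; rewrite /mon addrK -[y]addr0 -[y]mulr1 -(expr0 t).
by apply: lowS => //; apply: low0. Qed.

Lemma mon_1 (S : ringType) (G : S -> Prop) t : mon G t 0 1.
Proof. by rewrite /mon expr0 subrr; apply: low0. Qed.

Lemma mon_t (S : ringType) (G : S -> Prop) t N : mon G t N (t ^+ N).
Proof. by rewrite /mon subrr; apply: low0. Qed.

Lemma mon_exp (S : ringType) (G : S -> Prop) t w z e : subr G -> tcomm G t ->
  mon G t w z -> mon G t (w * e) (z ^+ e).
Proof. move=> hG ht hz; elim: e => [|e IH]; first by rewrite muln0 expr0; apply: mon_1.
by rewrite exprSr mulnSr; apply: mon_mul. Qed.

Lemma low_of_mon (S : ringType) (G : S -> Prop) t N z : subr G ->
  mon G t N z -> low G t N.+1 z.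
Proof. move=> hG hz; rewrite -(subrK (t ^+ N) z); apply: low_add.
  by apply: low_mono hz.
rewrite -[t ^+ N]addr0 -[t ^+ N]mul1r; apply: lowS => //; first by case: hG.
exact: low0. Qed.
Lemma low_rmul_t1 (S : ringType) (G : S -> Prop) t N u : subr G ->
  low G t N (t ^+ N) -> low G t N u -> low G t N (u * t).
Proof. move=> hG hN; elim=> [|g j z hg hj _ IH]; first by rewrite mul0r; apply: low0.
rewrite mulrDl -mulrA -exprSr; apply: low_add => //.
case: (ltngtP j.+1 N) => h.
- by rewrite -[_ * _]addr0; apply: lowS => //; apply: low0.
- by move: (leq_ltn_trans hj h); rewrite ltnn.
- by rewrite h; apply: low_lmul. Qed.

Lemma low_rmul_tpow (S : ringType) (G : S -> Prop) t N u j : subr G ->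
  low G t N (t ^+ N) -> low G t N u -> low G t N (u * t ^+ j).
Proof. move=> hG hN hu; elim: j => [|j IH]; first by rewrite expr0 mulr1.
by rewrite exprSr mulrA; apply: low_rmul_t1. Qed.

Lemma low_mul_closed (S : ringType) (G : S -> Prop) t N u v : subr G -> tcomm G t ->
  low G t N (t ^+ N) -> low G t N u -> low G t N v -> low G t N (u * v).
Proof. move=> hG ht hN hu; elim=> [|g j z hg hj _ IH]; first by rewrite mulr0; apply: low0.
rewrite mulrDr mulrA; apply: low_add => //.
by apply: low_rmul_tpow => //; apply: low_rmulG. Qed.

Lemma low_one (S : ringType) (G : S -> Prop) t N : subr G ->
  low G t N (t ^+ N) -> low G t N 1.
Proof. move=> hG; case: N => [|N]; first by rewrite expr0.
move=> _; have -> : (1 : S) = 1 * t ^+ 0 + 0 by rewrite expr0 mulr1 addr0.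
apply: lowS => //.
  by case: hG. exact: low0. Qed.

Lemma low_G (S : ringType) (G : S -> Prop) t N h : subr G ->
  low G t N (t ^+ N) -> G h -> low G t N h.
Proof. move=> hG hN hh; rewrite -[h]mulr1; apply: low_lmul => //; exact: low_one. Qed.

Lemma low_tpow (S : ringType) (G : S -> Prop) t N j : subr G ->
  low G t N (t ^+ N) -> low G t N (t ^+ j).
Proof. move=> hG hN; rewrite -[t ^+ j]mul1r; apply: low_rmul_tpow => //; exact: low_one. Qed.

Inductive lspan (S : ringType) (G : S -> Prop) (s : seq S) : S -> Prop :=
| ls0 : lspan G s 0
| lsS r u z : G r -> u \in s -> lspan G s z -> lspan G s (r * u + z).

Lemma lspan_add (S : ringType) (G : S -> Prop) s u v :
  lspan G s u -> lspan G s v -> lspan G s (u + v).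
Proof. elim=> [|r w z hr hw _ IH] hv; first by rewrite add0r.
by rewrite -addrA; apply: lsS => //; apply: IH. Qed.

Lemma lspan_rmul (S : ringType) (G : S -> Prop) (s s' : seq S) q g :
  (forall u, u \in s -> u * q \in s') -> lspan G s g -> lspan G s' (g * q).
Proof. move=> hs; elim=> [|r w z hr hw _ IH]; first by rewrite mul0r; apply: ls0.
by rewrite mulrDl -mulrA; apply: lsS => //; apply: hs. Qed.

Lemma low_to_lspan (S : ringType) (Gy Ga : S -> Prop) (s' : seq S) t N z :
  (forall g, Gy g -> lspan Ga s' g) -> low Gy t N z ->
  lspan Ga [seq u * t ^+ j | u <- s', j <- iota 0 N] z.
Proof. move=> hG; elim=> [|g j w hg hj _ IH]; first exact: ls0.
apply: lspan_add => //; apply: lspan_rmul (hG _ hg) => u hu.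
by apply: allpairs_f => //; rewrite mem_iota. Qed.

Lemma lspan_defs (S : ringType) (G : S -> Prop) (s : seq S) z : subr G ->
  lspan G s z -> exists r : nat -> S,
      (forall j, (j < size s)%N -> G (r j)) /\ z = \sum_(j < size s) r j * s`_j.
Proof. move=> hG; elim=> [|r u w hr hu _ [r' [hr' ->]]].
  exists (fun _ => 0); split; first by move=> j _; apply: subr0.
  by rewrite big1 // => j _; rewrite mul0r.
exists (fun j => (if j == index u s then r else 0) + r' j); split.
  move=> j hj; apply: subrD => //; last exact: hr'.
  by case: ifP => _ //; apply: subr0.
rewrite -[LHS]/(r * u + _).
have hi : (index u s < size s)%N by rewrite index_mem.
rewrite [RHS](eq_bigr (fun j : 'I_(size s) => (if j == Ordinal hi then r * s`_j else 0) + r' j * s`_j)); last first.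
  by move=> j _; rewrite mulrDl -val_eqE /=; congr (_ + _); case: ifP => _; rewrite ?mul0r.
rewrite big_split /= -big_mkcond big_pred1_eq /= nth_index //. Qed.

Lemma gen_subr (D S : ringType) (f : D -> S) m (a : 'I_m -> S) : subr (gen_subring f a).
Proof. split.
- by move=> P h1.
- move=> y z hy hz P h1 hB hM hf ha; exact: hB (hy P h1 hB hM hf ha) (hz P h1 hB hM hf ha).
- move=> y z hy hz P h1 hB hM hf ha; exact: hM (hy P h1 hB hM hf ha) (hz P h1 hB hM hf ha).
Qed.

Lemma gen_f (D S : ringType) (f : D -> S) m (a : 'I_m -> S) b : gen_subring f a (f b).
Proof. by move=> P h1 hB hM hf ha; apply: hf. Qed.

Lemma gen_a (D S : ringType) (f : D -> S) m (a : 'I_m -> S) i : gen_subring f a (a i).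
Proof. by move=> P h1 hB hM hf ha; apply: ha. Qed.

Lemma gen_comm (D S : ringType) (f : D -> S) m (a : 'I_m -> S) t :
  (forall b, f b * t = t * f b) -> (forall i, a i * t = t * a i) -> tcomm (gen_subring f a) t.
Proof. move=> hf ha g hg; apply: (hg (fun g => g * t = t * g)) => //.
- by rewrite mul1r mulr1.
- by move=> y z hy hz; rewrite mulrBl mulrBr hy hz.
- by move=> y z hy hz; rewrite -mulrA hz !mulrA hy.
Qed.

Lemma split_digit (r a b A B : nat) : (a < r)%N -> (b < r)%N ->
  (a + r * A = b + r * B)%N -> a = b /\ A = B.
Proof. move=> ha hb E.
have r0 : (0 < r)%N by apply: leq_ltn_trans ha.
have E' : (A * r + a = B * r + b)%N by rewrite addnC mulnC E addnC mulnC.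
have h1 := congr1 (fun x => x %% r)%N E'; rewrite /= !modnMDl !modn_small // in h1.
have h2 := congr1 (fun x => x %/ r)%N E'; rewrite /= !divnMDl // !divn_small // !addn0 in h2.
by split. Qed.

Lemma digits_inj (r n : nat) (d d' : 'I_n -> nat) : (forall i, d i < r)%N ->
  (forall i, d' i < r)%N -> (\sum_(i < n) d i * r ^ i = \sum_(i < n) d' i * r ^ i)%N ->
  forall i, d i = d' i.
Proof.
elim: n d d' => [|n IH] d d' hd hd' E i; first by case: i.
have F (e : 'I_n.+1 -> nat) : (\sum_(i < n) e (lift ord0 i) * r ^ (lift ord0 i) =
   r * \sum_(i < n) e (lift ord0 i) * r ^ i)%N.
  by rewrite big_distrr; apply: eq_bigr => j _; rewrite lift0 expnS mulnCA.
rewrite !big_ord_recl !F /= !expn0 !muln1 in E.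
have [e0 e1] := split_digit (hd ord0) (hd' ord0) E.
have IH' := IH (fun j => d (lift ord0 j)) (fun j => d' (lift ord0 j)) (fun j => hd _) (fun j => hd' _) e1.
by case: (unliftP ord0 i) => [j|] ->.
Qed.

Lemma exists_max (T : eqType) (s : seq T) (P : pred T) (F : T -> nat) :
  has P s -> exists x, [/\ x \in s, P x & forall y, y \in s -> P y -> (F y <= F x)%N].
Proof.
elim: s => [|a s IH] //= hP.
case: (boolP (has P s)) => [hs | hn].
  have [x [hx hpx hm]] := IH hs.
  case: (boolP (P a && (F x < F a)%N)) => [/andP [pa lt] | hb].
    exists a; split => //; first by rewrite in_cons eqxx.
    move=> y; rewrite in_cons => /orP [/eqP -> //|hy] py.
    by apply: leq_trans (ltnW lt); apply: hm.
  exists x; split => //; first by rewrite in_cons hx orbT.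
  move=> y; rewrite in_cons => /orP [/eqP -> |hy] py; last exact: hm.
  by move: hb; rewrite py /= -leqNgt.
have pa : P a by move: hP; rewrite (negbTE hn) orbF.
exists a; split => //; first by rewrite in_cons eqxx.
move=> y; rewrite in_cons => /orP [/eqP -> //|hy] py.
by move/hasPn: hn => /(_ y hy); rewrite py.
Qed.

Definition indep (D S : ringType) (f : D -> S) m (a : 'I_m -> S) :=
  forall (es : seq 'X_{1..m}) (c : 'X_{1..m} -> D), uniq es ->
    \sum_(e <- es) f (c e) * monom a e = 0 -> forall e, e \in es -> c e = 0.

Lemma nagata (D : unitRingType) (hD : division_ring D) (S : ringType) (f : D -> S)
  (f1 : f 1 = 1) (fM : forall a b, f (a * b) = f a * f b) (f0 : f 0 = 0)
  (k : nat) (x : 'I_k.+1 -> S) (xc : forall i j, x i * x j = x j * x i)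
  (xf : forall i b, x i * f b = f b * x i) :
  ~ indep f x -> exists r N, (0 < r)%N /\
    low (gen_subring f (fun i : 'I_k => x (lift ord0 i) - x ord0 ^+ (r ^ i.+1)))
        (x ord0) N (x ord0 ^+ N).
Proof.
move=> nind.
have [es [c [e0 [ues [hsum [he0 hc0]]]]]] : exists es c e0, [/\ uniq es,
    \sum_(e <- es) f (c e) * monom x e = 0, e0 \in es & c e0 <> 0].
  apply: NNPP => H; apply: nind => es c ues hs e he; apply: NNPP => hne; apply: H.
  by exists es, c, e.
pose t := x ord0.
pose r := (\max_(e <- es) \max_(i < k.+1) e i)%N.+1.
have r0 : (0 < r)%N by [].
pose y := fun i : 'I_k => x (lift ord0 i) - t ^+ (r ^ i.+1).
pose G := gen_subring f y.
have hG : subr G := gen_subr f y.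
have ht : tcomm G t.
  apply: gen_comm => [b|i]; first by rewrite xf.
  by rewrite /y mulrBl mulrBr xc -exprSr exprS.
have hr : forall e, e \in es -> forall i, (e i < r)%N.
  move=> e he i; rewrite ltnS.
  have h1 := @leq_bigmax _ (fun i => e i) i.
  have h2 := (@leq_bigmax_seq _ es xpredT (fun e : 'X_{1..k.+1} => \max_(i < k.+1) e i)%N e he isT).
  exact: leq_trans h1 h2.
pose W := fun e : 'X_{1..k.+1} => (\sum_(i < k.+1) e i * r ^ i)%N.
have Winj : forall e e', e \in es -> e' \in es -> W e = W e' -> e = e'.
  move=> e e' he he' E; apply/mnmP => i.
  exact: (digits_inj (hr e he) (hr e' he') E).
have Wmon : forall e, mon G t (W e) (monom x e).
  move=> e; rewrite /monom /W !big_ord_recl.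
  apply: mon_mul => //; first by rewrite /= expn0 muln1; apply: mon_t.
  elim/big_rec2: _ => [|i N z _ hz]; first exact: mon_1.
  apply: mon_mul => //; rewrite lift0 mulnC.
  have -> : x (lift ord0 i) = y i + t ^+ (r ^ i.+1) by rewrite /y subrK.
  apply: mon_exp => //; apply: mon_y; first exact: gen_a.
  by rewrite expn_gt0 r0.
have hasP' : has (fun e => c e != 0) es by apply/hasP; exists e0 => //; apply/eqP.
have [es_ [hin hpc hmax]] := exists_max W hasP'.
exists r, (W es_); split => //.
change (low G t (W es_) (t ^+ W es_)).
move: hsum; rewrite (bigD1_seq es_) //= => hsum.
have hrest : low G t (W es_) (\sum_(e <- es | e != es_) f (c e) * monom x e).
  rewrite big_seq_cond; apply: (big_rec (low G t (W es_))); first exact: low0.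
  move=> e z /andP [he hne] hz; apply: low_add => //.
  case: (eqVneq (c e) 0) => [-> | hce]; first by rewrite f0 mul0r; apply: low0.
  have lt : (W e < W es_)%N.
    rewrite ltn_neqAle hmax // andbT; apply/eqP => E.
    by move: hne; rewrite (Winj _ _ he hin E) eqxx.
  apply: (low_mono lt); apply: low_lmul => //.
  exact: low_of_mon.
have hlead : low G t (W es_) (f (c es_) * monom x es_ - f (c es_) * t ^+ W es_).
  by rewrite -mulrBr; apply: low_lmul (Wmon es_) => //; apply: gen_f.
have : low G t (W es_) (- ((f (c es_) * monom x es_ - f (c es_) * t ^+ W es_) +
         \sum_(e <- es | e != es_) f (c e) * monom x e)).
  by apply: low_opp => //; apply: low_add.
rewrite addrAC hsum sub0r opprK => hb.
have hu : c es_ \is a GRing.unit by apply: hD.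
have -> : t ^+ W es_ = f (c es_)^-1 * (f (c es_) * t ^+ W es_).
  by rewrite mulrA -fM mulVr // f1 mul1r.
by apply: low_lmul => //; apply: gen_f.
Qed.

Lemma indep_case (D S : ringType) (f : D -> S) k (x : 'I_k -> S)
  (xc : forall i j, x i * x j = x j * x i) (xf : forall i b, x i * f b = f b * x i) :
  indep f x -> exists m (a : 'I_m -> S),
    [/\ (forall i j, a i * a j = a j * a i), (forall i b, a i * f b = f b * a i),
        indep f a & exists s : seq S, forall z, gen_subring f x z -> lspan (gen_subring f a) s z].
Proof.
move=> hi; exists k, x; split => //; exists [:: 1] => z hz.
have -> : z = z * 1 + 0 by rewrite mulr1 addr0.
by apply: lsS => //; [rewrite mem_seq1 | exact: ls0].
Qed.

Lemma comm_y (S : ringType) (u v t : S) a b : GRing.comm u v -> GRing.comm u t ->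
  GRing.comm v t -> GRing.comm (u - t ^+ a) (v - t ^+ b).
Proof. move=> uv ut vt; apply: commrB.
  apply: commr_sym; apply: commrB; first exact: commr_sym.
  exact: commrX.
apply: commrX; apply: commr_sym; apply: commrB; first exact: commr_sym.
apply: commrX; exact: commr_refl. Qed.

Lemma mainlem (D : unitRingType) (hD : division_ring D) (S : ringType) (f : D -> S)
  (f1 : f 1 = 1) (fM : forall a b, f (a * b) = f a * f b) (f0 : f 0 = 0)
  (finj : forall c, f c = 0 -> c = 0) (k : nat) :
  forall (x : 'I_k -> S), (forall i j, x i * x j = x j * x i) ->
  (forall i b, x i * f b = f b * x i) -> exists m (a : 'I_m -> S),
    [/\ (forall i j, a i * a j = a j * a i), (forall i b, a i * f b = f b * a i),
        indep f a & exists s : seq S, forall z, gen_subring f x z -> lspan (gen_subring f a) s z].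
Proof.
elim: k => [|k IH] x xc xf.
  apply: indep_case => // es c ues hs e he.
  rewrite (bigD1_seq e) //= big1_seq in hs; last first.
    move=> i /andP [hne hi]; move: hne; have -> : i = e by apply/mnmP; case.
    by rewrite eqxx.
  by apply: finj; rewrite addr0 /monom big_ord0 mulr1 in hs.
case: (classic (indep f x)) => hi; first exact: indep_case.
have [r [N [r0 hN]]] := nagata hD f1 fM f0 xc xf hi.
set t := x ord0 in hN.
set y := (fun i : 'I_k => x (lift ord0 i) - t ^+ (r ^ i.+1)) in hN.
have tf : forall b, GRing.comm (f b) t by move=> b; rewrite /GRing.comm -xf.
have yc : forall i j, y i * y j = y j * y i.
  move=> i j; apply: comm_y => //; rewrite /GRing.comm xc //.
have yf : forall i b, y i * f b = f b * y i.
  move=> i b; apply: commr_sym; apply: commrB; first by rewrite /GRing.comm xf.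
  exact: commrX.
have [m [a [ac af ai [s' hs']]]] := IH y yc yf.
exists m, a; split => //.
exists [seq u * t ^+ j | u <- s', j <- iota 0 N] => z hz.
apply: (low_to_lspan hs').
have hG := gen_subr f y.
have ht : tcomm (gen_subring f y) t.
  apply: gen_comm => [b|i]; first by rewrite -tf.
  by apply: commr_sym; apply: commrB; [rewrite /GRing.comm xc | apply: commrX].
apply: (hz (low (gen_subring f y) t N)).
- exact: low_one.
- by move=> u v hu hv; apply: low_add => //; apply: low_opp.
- by move=> u v hu hv; apply: low_mul_closed.
- by move=> b; apply: low_G => //; apply: gen_f.
- move=> i; case: (unliftP ord0 i) => [j|] ->.
    have -> : x (lift ord0 j) = y j + t ^+ (r ^ j.+1) by rewrite /y subrK.
    by apply: low_add; [apply: low_G => //; apply: gen_a | apply: low_tpow].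
  by rewrite -[x ord0]expr1; apply: low_tpow.
Qed.

Lemma gen_exp (S : ringType) (G : S -> Prop) u e : subr G -> G u -> G (u ^+ e).
Proof. move=> hG hu; elim: e => [|e IH]; first by rewrite expr0; case: hG.
by rewrite exprS; case: hG => _ _ hM; apply: hM. Qed.

Theorem theorem4p3 (D : unitRingType) (hD : division_ring D) (n : nat)
    (I : {pred {mpoly D[n]}}) (hI : proper_twosided_ideal I)
    (S : ringType) (pi : {rmorphism {mpoly D[n]} -> S})
    (pi_surj : forall y : S, exists p, pi p = y)
    (pi_ker : forall p, pi p = 0 <-> p \in I) :
  centrally_normalizable (fun r : D => pi r%:MP).
Proof.
pose f := fun r : D => pi r%:MP.
have f1 : f 1 = 1 by rewrite /f !rmorph1.
have fM : forall a b, f (a * b) = f a * f b by move=> a b; rewrite /f !rmorphM.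
have f0 : f 0 = 0 by rewrite /f !raddf0.
have finj : forall c, f c = 0 -> c = 0.
  move=> c hc; apply: NNPP => hne.
  have hu : c \is a GRing.unit by apply: hD; apply/eqP.
  case: hI => _ _ _ _ /negP; apply; apply/pi_ker.
  have -> : (1 : {mpoly D[n]}) = (1 : D)%:MP by rewrite rmorph1.
  by rewrite -(mulVr hu) -/(f _) fM hc mulr0.
pose x := fun i : 'I_n => pi 'X_i.
have xc : forall i j, x i * x j = x j * x i.
  by move=> i j; rewrite /x -!rmorphM; congr (pi _); apply: commr_mpolyX.
have xf : forall i b, x i * f b = f b * x i.
  by move=> i b; rewrite /x /f -!rmorphM; congr (pi _); symmetry; apply: commr_mpolyX.
have [m [a [ac af ai [s hs]]]] := mainlem hD f1 fM f0 finj xc xf.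
exists m, a; split => //.
exists s => z; have [p <-] := pi_surj z.
apply: lspan_defs; first exact: gen_subr.
apply: hs.
have hG := gen_subr f x.
rewrite (mpolyE p) rmorph_sum; apply: (big_rec (gen_subring f x)); first exact: subr0.
move=> mm w _ hw; apply: (subrD hG) => //.
rewrite -mul_mpolyC rmorphM mpolyXE_id rmorph_prod; case: (hG) => _ _ hM; apply: hM.
  by move=> P h1 hB hM0 hf ha; apply: (hf (p@_mm)).
apply: (big_rec (gen_subring f x)); first by case: hG.
move=> i v _ hv; case: (hG) => _ _ hM2; apply: hM2 => //; rewrite rmorphXn; apply: (gen_exp _ hG).
by move=> P h1 hB hM0 hf ha; apply: ha.
Qed.
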